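(* Let $\mathcal I$ be an instance of $\mathrm{CSP}(\Gamma_0)$ on variables $u_1,\dots,u_n$, whose constraints are of the forms $(u_i=u_j\vee u_k=0)$, $(u_i=u_j\vee u_k=1)$, $u_i=1$, $u_i=0$ (interpreted over $\{0,1\}$). Let $\mathcal J$ be the instance on the $3n+3$ variables $x,x',y',x_1,\dots,x_n,y_1,\dots,y_n,z_1,\dots,z_n$ over the domain $\{0,1,2\}$ consisting of the following constraints (all indices range over $[n]=\{1,\dots,n\}$): $\mathcal C_1$: $N(x,x_i,y_i)$ for all $i$; $\mathcal C_2$: $N(x',z_i,y_i)$ for all $i$; $\mathcal C_3$: $N(y',z_i,x_i)$ for all $i$; $\mathcal C_4$: $N(t_1,t_2,t_3)$ for all $t_1,t_2,t_3\in\{x,x',x_1,\dots,x_n\}$; $\mathcal C_5$: $N(t_1,t_2,t_3)$ for all $t_1,t_2,t_3\in\{x,y',y_1,\dots,y_n\}$; $\mathcal C_6$: $N(t_1,t_2,t_3)$ for all $t_1,t_2,t_3\in\{x',y',z_1,\dots,z_n\}$; $\mathcal C_7$: $N(x_i,y_j,z_i)$ for all $i,j$; $\mathcal C_8$: $N(x_i,y_j,z_j)$ for all $i,j$; $\mathcal C_9$: $N(x,x_i,z_i)$ for all $i$; $\mathcal C_{10}$: $N(x,y_i,z_i)$ for all $i$; $\mathcal C_{11}$: $N(x_i,x_j,y_k)$ for each constraint $(u_i=u_j\vee u_k=0)$ of $\mathcal I$; $\mathcal C_{12}$: $N(y_i,y_j,x_k)$ for each constraint $(u_i=u_j\vee u_k=1)$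 of $\mathcal I$; $\mathcal C_{13}$: $x=x_i$ for each constraint $u_i=1$ of $\mathcal I$; $\mathcal C_{14}$: $x=y_i$ for each constraint $u_i=0$ of $\mathcal I$. Then $\mathcal I$ has a solution if and only if $\mathcal J$ has a surjective solution, i.e. an assignment of values in $\{0,1,2\}$ to all $3n+3$ variables satisfying all constraints of $\mathcal J$ and taking every value $0,1,2$.
   Context: $N=\{(a,b,c)\in\{0,1,2\}^{3}\mid \{a,b,c\}\neq\{0,1,2\}\}$, i.e. $N(a,b,c)$ holds iff $a,b,c$ are not pairwise distinct. $\Gamma_0$ is the constraint language on $\{0,1\}$ consisting of the relations $\{(x,y,z)\mid x=y\text{ or }z=0\}$, $\{(x,y,z)\mid x=y\text{ or }z=1\}$, $\{0\}$, $\{1\}$. A solution of $\mathcal I$ is an assignment $u_1,\dots,u_n\in\{0,1\}$ satisfying all its constraints. *)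

(* Defs.v *)
From mathcomp Require Import all_boot.
From Stdlib Require List.
Set Implicit Arguments. Unset Strict Implicit. Unset Printing Implicit Defensive.

Definition N3 (a b c : 'I_3) : bool := ~~ [&& a != b, b != c & a != c].

(* Constraints of an instance of CSP(Gamma_0) on variables u_0..u_{n-1}
   (0-indexed version of u_1..u_n). *)
Inductive g0cons (n : nat) : Type :=
| EqOr0 of 'I_n & 'I_n & 'I_n
| EqOr1 of 'I_n & 'I_n & 'I_n
| Is1 of 'I_n
| Is0 of 'I_n.

Definition g0inst (n : nat) := seq (g0cons n).

Definition g0sat n (u : 'I_n -> 'I_2) (c : g0cons n) : Prop :=
  match c with
  | EqOr0 i j k => u i = u j \/ nat_of_ord (u k) = 0
  | EqOr1 i j k => u i = u j \/ nat_of_ord (u k) = 1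
  | Is1 i => nat_of_ord (u i) = 1
  | Is0 i => nat_of_ord (u i) = 0
  end.

Definition g0solution n (I : g0inst n) (u : 'I_n -> 'I_2) : Prop :=
  forall c, List.In c I -> g0sat u c.

Definition allN3 (s : seq 'I_3) : Prop :=
  forall a b c, a \in s -> b \in s -> c \in s -> N3 a b c.

Definition Jcons n (x : 'I_3) (X Y : 'I_n -> 'I_3) (c : g0cons n) : Prop :=
  match c with
  | EqOr0 i j k => N3 (X i) (X j) (Y k)
  | EqOr1 i j k => N3 (Y i) (Y j) (X k)
  | Is1 i => x = X i
  | Is0 i => x = Y i
  end.

Definition Jsolution n (I : g0inst n) (x x' y' : 'I_3) (X Y Z : 'I_n -> 'I_3)
  : Prop :=
  (forall i, N3 x (X i) (Y i)) /\
      (forall i, N3 x' (Z i) (Y i)) /\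
      (forall i, N3 y' (Z i) (X i)) /\
      allN3 [:: x, x' & [seq X i | i : 'I_n]] /\
      allN3 [:: x, y' & [seq Y i | i : 'I_n]] /\
      allN3 [:: x', y' & [seq Z i | i : 'I_n]] /\
      (forall i j, N3 (X i) (Y j) (Z i)) /\
      (forall i j, N3 (X i) (Y j) (Z j)) /\
      (forall i, N3 x (X i) (Z i)) /\
      (forall i, N3 x (Y i) (Z i)) /\
    (forall c, List.In c I -> Jcons x X Y c).

Definition Jsurjective n (x x' y' : 'I_3) (X Y Z : 'I_n -> 'I_3) : Prop :=
  forall v : 'I_3,
    v = x \/ v = x' \/ v = y' \/
    (exists i, v = X i) \/ (exists i, v = Y i) \/ (exists i, v = Z i).

(* Main.v *)
Require Import Defs.
From mathcomp Require Import all_boot.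
Set Implicit Arguments. Unset Strict Implicit. Unset Printing Implicit Defensive.

Definition o0 : 'I_3 := @Ordinal 3 0 isT.
Definition o1 : 'I_3 := @Ordinal 3 1 isT.
Definition o2 : 'I_3 := @Ordinal 3 2 isT.
Definition I3s : seq 'I_3 := [:: o0; o1; o2].
Definition all3 (P : 'I_3 -> bool) := all P I3s.

Lemma memI3 a : a \in I3s.
Proof.
by case: a => [[|[|[|m]]] Hm].
Qed.

Lemma all3P P : all3 P -> forall a, P a.
Proof. by move=> /allP H a; apply: H; apply: memI3. Qed.

Definition tri3 (l : seq 'I_3) := ~~ [&& o0 \in l, o1 \in l & o2 \in l].
Definition dist (x x' y' : 'I_3) := [&& x != x', x != y' & x' != y'].

Definition loc (x x' y' a b c : 'I_3) :=
  [&& N3 x a b, N3 x' c b, N3 y' c a, N3 x a c & N3 x b c].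
Definition cr (a b c a' b' c' : 'I_3) := N3 a b' c && N3 a b' c'.

Definition G0 (x x' y' a0 b0 c0 : 'I_3) := [&& loc x x' y' a0 b0 c0, cr a0 b0 c0 a0 b0 c0 & o0 \in [:: x; x'; y'; a0; b0; c0]].
Definition G1 (x x' y' a0 b0 c0 a1 b1 c1 : 'I_3) :=
  [&& loc x x' y' a1 b1 c1, cr a1 b1 c1 a1 b1 c1, cr a0 b0 c0 a1 b1 c1, cr a1 b1 c1 a0 b0 c0 & o1 \in [:: x; x'; y'; a1; b1; c1]].
Definition G2 (x x' y' a0 b0 c0 a1 b1 c1 a2 b2 c2 : 'I_3) :=
  [&& loc x x' y' a2 b2 c2, cr a2 b2 c2 a2 b2 c2, cr a0 b0 c0 a2 b2 c2, cr a2 b2 c2 a0 b0 c0,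
      cr a1 b1 c1 a2 b2 c2, cr a2 b2 c2 a1 b1 c1,
      tri3 [:: x; x'; a0; a1; a2], tri3 [:: x; y'; b0; b1; b2], tri3 [:: x'; y'; c0; c1; c2] &
      o2 \in [:: x; x'; y'; a2; b2; c2]].

Lemma big_b : all3 (fun x => all3 (fun x' => all3 (fun y' => if dist x x' y' then true else
  all3 (fun a0 => all3 (fun b0 => all3 (fun c0 => if G0 x x' y' a0 b0 c0 then
  all3 (fun a1 => all3 (fun b1 => all3 (fun c1 => if G1 x x' y' a0 b0 c0 a1 b1 c1 then
  all3 (fun a2 => all3 (fun b2 => all3 (fun c2 =>
  ~~ G2 x x' y' a0 b0 c0 a1 b1 c1 a2 b2 c2))) else true))) else true)))))).
Proof. vm_compute. reflexivity. Qed.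

Lemma big x x' y' a0 b0 c0 a1 b1 c1 a2 b2 c2 :
  G0 x x' y' a0 b0 c0 -> G1 x x' y' a0 b0 c0 a1 b1 c1 ->
  G2 x x' y' a0 b0 c0 a1 b1 c1 a2 b2 c2 -> dist x x' y'.
Proof.
move=> g0 g1 g2; have := big_b.
move=> /all3P/(_ x)/all3P/(_ x')/all3P/(_ y').
case: (dist x x' y') => // /all3P/(_ a0)/all3P/(_ b0)/all3P/(_ c0).
rewrite g0 => /all3P/(_ a1)/all3P/(_ b1)/all3P/(_ c1).
rewrite g1 => /all3P/(_ a2)/all3P/(_ b2)/all3P/(_ c2).
by rewrite g2.
Qed.

Lemma Lf_b : all3 (fun x => all3 (fun x' => all3 (fun y' => all3 (fun a =>
  all3 (fun b => all3 (fun c => dist x x' y' ==> N3 x x' a ==> N3 x y' b ==> N3 x' y' c ==>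
   N3 x a b ==> N3 x' c b ==> N3 y' c a ==> N3 x a c ==> N3 x b c ==>
   ((a == x) == (b != x)))))))).
Proof. vm_compute. reflexivity. Qed.

Lemma Lf x x' y' a b c : dist x x' y' -> N3 x x' a -> N3 x y' b -> N3 x' y' c ->
   N3 x a b -> N3 x' c b -> N3 y' c a -> N3 x a c -> N3 x b c ->
   (a == x) = (b != x).
Proof.
move=> h1 h2 h3 h4 h5 h6 h7 h8 h9; have := Lf_b.
move=> /all3P/(_ x)/all3P/(_ x')/all3P/(_ y')/all3P/(_ a)/all3P/(_ b)/all3P/(_ c).
by rewrite h1 h2 h3 h4 h5 h6 h7 h8 h9; move/eqP.
Qed.

Lemma L11_b : all3 (fun x => all3 (fun x' => all3 (fun y' => all3 (fun a =>
  all3 (fun b => all3 (fun c => dist x x' y' ==> N3 x x' a ==> N3 x x' b ==> N3 x y' c ==>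
   N3 a b c ==> ((a == x) == (b == x)) || (c == x)))))))
 && all3 (fun x => all3 (fun x' => all3 (fun y' => all3 (fun a =>
  all3 (fun b => all3 (fun c => dist x x' y' ==> N3 x y' a ==> N3 x y' b ==> N3 x x' c ==>
   N3 a b c ==> ((a == x) == (b == x)) || (c == x))))))).
Proof. vm_compute. reflexivity. Qed.

Lemma L11 x x' y' a b c : dist x x' y' -> N3 x x' a -> N3 x x' b -> N3 x y' c ->
   N3 a b c -> ((a == x) == (b == x)) || (c == x).
Proof.
move=> h1 h2 h3 h4 h5; have := L11_b => /andP[+ _].
move=> /all3P/(_ x)/all3P/(_ x')/all3P/(_ y')/all3P/(_ a)/all3P/(_ b)/all3P/(_ c).
by rewrite h1 h2 h3 h4 h5.
Qed.

Lemma L12 x x' y' a b c : dist x x' y' -> N3 x y' a -> N3 x y' b -> N3 x x' c ->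
   N3 a b c -> ((a == x) == (b == x)) || (c == x).
Proof.
move=> h1 h2 h3 h4 h5; have := L11_b => /andP[_].
move=> /all3P/(_ x)/all3P/(_ x')/all3P/(_ y')/all3P/(_ a)/all3P/(_ b)/all3P/(_ c).
by rewrite h1 h2 h3 h4 h5.
Qed.

Lemma B2_b : all3 (fun p => all3 (fun q => all3 (fun a => all3 (fun b => all3 (fun c =>
  (a \in [:: p; q]) ==> (b \in [:: p; q]) ==> (c \in [:: p; q]) ==> N3 a b c))))).
Proof. vm_compute. reflexivity. Qed.

Lemma allN3_sub p q s : {subset s <= [:: p; q]} -> allN3 s.
Proof.
move=> H a b c /H ha /H hb /H hc; have := B2_b.
move=> /all3P/(_ p)/all3P/(_ q)/all3P/(_ a)/all3P/(_ b)/all3P/(_ c).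
by rewrite ha hb hc.
Qed.

Lemma tri3_of (s l : seq 'I_3) : allN3 s -> {subset l <= s} -> tri3 l.
Proof.
move=> H sub; rewrite /tri3; apply/negP => /and3P[h0 h1 h2].
by have := H o0 o1 o2 (sub _ h0) (sub _ h1) (sub _ h2).
Qed.

Lemma sub2 n (p q : 'I_3) (f : 'I_n -> 'I_3) : (forall i, f i \in [:: p; q]) ->
  {subset [:: p, q & [seq f i | i : 'I_n]] <= [:: p; q]}.
Proof.
move=> H a; case/predU1P => [->|]; first by rewrite mem_head.
case/predU1P => [->|]; first by rewrite !inE eqxx orbT.
by case/mapP => i _ ->.
Qed.

Lemma sub5 n (p q : 'I_3) (f : 'I_n -> 'I_3) i j k :
  {subset [:: p; q; f i; f j; f k] <= [:: p, q & [seq f l | l : 'I_n]]}.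
Proof.
have mf l : f l \in [seq f l | l : 'I_n] by apply: map_f; rewrite mem_enum.
move=> a; case/predU1P => [->|]; first by rewrite mem_head.
case/predU1P => [->|]; first by rewrite !in_cons eqxx orbT.
case/predU1P => [->|]; first by rewrite !in_cons mf !orbT.
case/predU1P => [->|]; first by rewrite !in_cons mf !orbT.
by case/predU1P => [->|] //; rewrite !in_cons mf !orbT.
Qed.

Lemma N3aa a b : N3 a a b.
Proof. by rewrite /N3 eqxx. Qed.

Definition o20 : 'I_2 := @Ordinal 2 0 isT.
Definition o21 : 'I_2 := @Ordinal 2 1 isT.

Theorem lemma3p2 (n : nat) (I : g0inst n) :
  (exists u : 'I_n -> 'I_2, g0solution I u) <->
  (exists (x x' y' : 'I_3) (X Y Z : 'I_n -> 'I_3),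
      Jsolution I x x' y' X Y Z /\ Jsurjective x x' y' X Y Z).
Proof.
split.
- case=> u Hu.
  pose b i := (nat_of_ord (u i) == 1%N).
  exists o0, o1, o2, (fun i => if b i then o0 else o1), (fun i => if b i then o2 else o0),
    (fun i => if b i then o2 else o1).
  split; last first.
    by case=> [[|[|[|m]]] Hm] //; [left | right; left | right; right; left]; apply/val_inj.
  split; first by move=> i; case: (b i).
  split; first by move=> i; case: (b i).
  split; first by move=> i; case: (b i).
  split.
    by apply: (@allN3_sub o0 o1); apply: sub2 => i; case: (b i).
  split.
    by apply: (@allN3_sub o0 o2); apply: sub2 => i; case: (b i).
  split.
    by apply: (@allN3_sub o1 o2); apply: sub2 => i; case: (b i).
  split; first by move=> i j; case: (b i); case: (b j).
  split; first by move=> i j; case: (b i); case: (b j).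
  split; first by move=> i; case: (b i).
  split; first by move=> i; case: (b i).
  move=> c /Hu; case: c => [i j k|i j k|i|i] /=.
  + case=> [Hij|Hk]; first by rewrite /b Hij N3aa.
    by rewrite {3}/b Hk /=; case: (b i); case: (b j).
  + case=> [Hij|Hk]; first by rewrite /b Hij N3aa.
    by rewrite {3}/b Hk /=; case: (b i); case: (b j).
  + by move=> H; rewrite /b H.
  + by move=> H; rewrite /b H.
- case: n I => [|m] I.
    move=> _; exists (fun _ => o20) => c _; exfalso.
    by case: c => [[k Hk] _ _|[k Hk] _ _|[k Hk]|[k Hk]].
  case=> x [x' [y' [X [Y [Z [[H1 [H2 [H3 [H4 [H5 [H6 [H7 [H8 [H9 [H10 H11]]]]]]]]]] Hs]]]]]].
  have mX (F : 'I_m.+1 -> 'I_3) i : F i \in [seq F j | j : 'I_m.+1].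
    by apply: map_f; rewrite mem_enum.
  have W v : exists i, v \in [:: x; x'; y'; X i; Y i; Z i].
    case: (Hs v) => [->|[->|[->|[[i ->]|[[i ->]|[i ->]]]]]].
    + by exists ord0; rewrite !inE eqxx.
    + by exists ord0; rewrite !inE eqxx !orbT.
    + by exists ord0; rewrite !inE eqxx !orbT.
    + by exists i; rewrite !inE eqxx !orbT.
    + by exists i; rewrite !inE eqxx !orbT.
    + by exists i; rewrite !inE eqxx !orbT.
  have [i0 W0] := W o0; have [i1 W1] := W o1; have [i2 W2] := W o2.
  have C4 i : N3 x x' (X i) by apply: H4; rewrite !inE ?eqxx ?mX ?orbT.
  have C5 i : N3 x y' (Y i) by apply: H5; rewrite !inE ?eqxx ?mX ?orbT.
  have C6 i : N3 x' y' (Z i) by apply: H6; rewrite !inE ?eqxx ?mX ?orbT.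
  have D : dist x x' y'.
    apply: (@big x x' y' (X i0) (Y i0) (Z i0) (X i1) (Y i1) (Z i1) (X i2) (Y i2) (Z i2)).
    + by rewrite /G0 /loc /cr !H1 !H2 !H3 !H9 !H10 !H7 ?H8 W0.
    + by rewrite /G1 /loc /cr !H1 !H2 !H3 !H9 !H10 !H7 ?H8 W1.
    + rewrite /G2 /loc /cr !H1 !H2 !H3 !H9 !H10 !H7 ?H8 W2.
      by rewrite (tri3_of H4 (@sub5 _ _ _ X i0 i1 i2)) (tri3_of H5 (@sub5 _ _ _ Y i0 i1 i2))
        (tri3_of H6 (@sub5 _ _ _ Z i0 i1 i2)).
  have F i : (X i == x) = (Y i != x).
    by apply: (Lf D (C4 i) (C5 i) (C6 i)).
  exists (fun i => if X i == x then o21 else o20) => c /H11.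
  case: c => [i j k|i j k|i|i] /= h.
  + case/orP: (L11 D (C4 i) (C4 j) (C5 k) h) => [/eqP->|hk]; first by left.
    by right; rewrite F hk.
  + case/orP: (L12 D (C5 i) (C5 j) (C4 k) h) => [/eqP e|hk]; last by right; rewrite hk.
    by left; rewrite !F e.
  + by rewrite -h eqxx.
  + by rewrite F -h eqxx.
Qed.
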